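(* Let $G$ be a connected topological group and $\Gamma$ a dense subgroup of $G$. Let $H_1,\dots,H_n$ be subgroups of $\Gamma$ none of which is dense in $G$, and let $X=\bigcup_{i=1}^n a_iH_i$ with $a_i\in\Gamma$ be a finite union of cosets of the $H_i$. Then $\Gamma\setminus X$ is dense in $G$. *)

(* Defs.v *)
From HB Require Import structures.
From mathcomp Require Import all_boot all_order.
From mathcomp Require Import monoid.
From mathcomp Require Import all_classical all_reals topology.

Set Implicit Arguments.
Unset Strict Implicit.
Unset Printing Implicit Defensive.

Local Open Scope classical_set_scope.
Local Open Scope group_scope.

HB.mixin Record isTopologicalGroup G of Group G & Topological G := {
  mulg_continuous : continuous (fun xy : G * G => (xy.1 * xy.2)%g) ;
  invg_continuous : continuous (fun x : G => (x^-1)%g)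
}.

#[short(type="topologicalGroupType")]
HB.structure Definition TopologicalGroup :=
  {G of isTopologicalGroup G & Group G & Topological G}.

Definition is_subgroup (G : groupType) (S : set G) : Prop :=
  S 1%g /\ (forall x y, S x -> S y -> S (x * y)%g) /\ (forall x, S x -> S (x^-1)%g).

Definition lcoset (G : groupType) (a : G) (S : set G) : set G :=
  [set (a * s)%g | s in S].

(* Main.v *)
Require Import Defs.
From HB Require Import structures.
From mathcomp Require Import all_boot all_order.
From mathcomp Require Import monoid.
From mathcomp Require Import all_classical all_reals topology.
Local Open Scope classical_set_scope.
Section S.
Local Open Scope group_scope.
Variable G : topologicalGroupType.
Lemma lmul_cont (c : G) : continuous (fun y : G => c * y).
Proof.
move=> y.
have hp : (fun z : G => (c, z)) @ nbhs y --> nbhs (c, y).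
  apply: cvg_pair; [exact: cvg_cst | exact: cvg_id].
exact: (cvg_comp _ _ hp (@mulg_continuous G (c, y))).
Qed.
Lemma closure_mul (S : set G) : is_subgroup S -> forall x y, closure S x -> closure S y -> closure S (x * y).
Proof.
move=> [S1 [SM SV]] x y cx cy B nB.
have := @mulg_continuous G (x, y) _ nB.
move=> [[A1 A2] /= [n1 n2] sub].
have [s [Ss As]] := cx _ n1.
have [t [St At]] := cy _ n2.
exists (s * t); split; first exact: SM.
exact: (sub (s, t)).
Qed.
Lemma closure_inv (S : set G) : is_subgroup S -> forall x, closure S x -> closure S x^-1.
Proof.
move=> [S1 [SM SV]] x cx B nB.
have := @invg_continuous G x _ nB.
move=> /cx [s [Ss Bs]].
by exists s^-1; split; [exact: SV|].
Qed.
Lemma open_subgroup_all (S : set G) : connected [set: G] -> is_subgroup S ->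
  forall V : set G, open V -> V !=set0 -> V `<=` closure S -> closure S = setT.
Proof.
move=> conn HS V oV [v Vv] sV.
set K := closure S.
have Kop : open K.
  rewrite openE => k Kk.
  have nV : nbhs (v * k^-1 * k) V by rewrite mulgVK; exact: open_nbhs_nbhs.
  have := lmul_cont (v * k^-1) k _ nV.
  move=> h; change (nbhs k K).
  suff sub : (fun y => v * k^-1 * y) @^-1` V `<=` K by exact: (filterS sub h).
  move=> y /= Vy.
  have -> : y = (k * v^-1) * (v * k^-1 * y).
    by rewrite !mulgA mulgVK mulgV mul1g.
  apply: closure_mul => //; last exact: sV.
  apply: closure_mul => //; apply: closure_inv => //; exact: sV.
rewrite -[RHS](conn K).
- by [].
- by exists v; exact: sV.
- by exists K => //; rewrite setTI.
- by exists K; [exact: closed_closure | rewrite setTI].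
Qed.
Lemma coset_nowhere (H : set G) (a : G) : connected [set: G] ->
  is_subgroup H -> ~ dense H ->
  forall V, open V -> V !=set0 -> ~ (V `<=` closure (lcoset a H)).
Proof.
move=> conn HS nd V oV [v Vv] sub.
pose V' := (fun y => a * y) @^-1` V.
have oV' : open V' by move: oV; apply: (proj1 (continuousP _)); exact: lmul_cont.
have cH : closure H = setT.
  apply: (@open_subgroup_all H conn HS V' oV').
    by exists (a^-1 * v); rewrite /V' /= mulVKg.
  move=> y Vy B nB.
  have nB' : nbhs (a * y) ((fun z => a^-1 * z) @^-1` B).
    apply: (lmul_cont a^-1 (a * y)); rewrite /= mulKg; exact: nB.
  have [g [[h Hh <-] Bh]] := sub _ Vy _ nB'.
  by exists h; split => //; move: Bh; rewrite /= mulKg.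
have [O [[x xO] OH]] := denseNE nd.
have : closure H x by rewrite cH.
move=> /(_ O (open_nbhs_nbhs xO)) [z [Hz Oz]].
by have : (O `&` H) z by []; rewrite OH.
Qed.
End S.
Local Open Scope classical_set_scope.
Theorem lemma5p2 (G : topologicalGroupType) (Gamma : set G) (n : nat)
    (H : 'I_n -> set G) (a : 'I_n -> G) :
  connected [set: G] ->
  is_subgroup Gamma -> dense Gamma ->
  (forall i, is_subgroup (H i) /\ H i `<=` Gamma /\ ~ dense (H i)) ->
  (forall i, Gamma (a i)) ->
  dense (Gamma `\` \bigcup_(i in [set: 'I_n]) lcoset (a i) (H i)).
Proof.
move=> conn _ dG hH _ O O0 oO.
pose F i := closure (lcoset (a i) (H i)).
have step : forall m, exists V, [/\ open V, V !=set0, V `<=` O &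
    forall i : 'I_n, (i < m)%N -> V `&` F i = set0].
  elim=> [|m [V [oV V0 VO VF]]].
    by exists O; split.
  case: (ltnP m n) => hm; last first.
    exists V; split => // i hi; apply: VF; exact: (leq_trans (ltn_ord i) hm).
  pose i0 := Ordinal hm.
  exists (V `&` ~` F i0); split.
  - by apply: openI => //; rewrite -closedC setCK; exact: closed_closure.
  - apply/set0P/negP => /eqP V0'.
    have [hs [_ hnd]] := hH i0.
    apply: (@coset_nowhere G _ (a i0) conn hs hnd V oV V0) => x Vx.
    apply: contrapT => nFx.
    by have : (V `&` ~` F i0) x by []; rewrite V0'.
  - by move=> x [/VO].
  - move=> i; rewrite ltnS leq_eqVlt => /orP [/eqP ei|lt].
      have -> : i = i0 by apply: val_inj.
      by apply/seteqP; split=> x // [[_ ?] ?].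
    by apply/seteqP; split=> x // [[Vx _] Fx]; rewrite -(VF i lt); split.
have [V [oV V0 VO VF]] := step n.
have [g [Vg Gg]] := dG V V0 oV.
exists g; split; first exact: VO.
split => //= -[i _ cg].
have : (V `&` F i) g by split => //; exact: subset_closure.
by rewrite VF.
Qed.
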